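(* Fix a static price vector $\boldsymbol{\phi}=(\phi_1,\phi_2)\in[0,\phi_h]^2$ with $\phi_1\ge\phi_2$ (the case $\phi_1<\phi_2$ follows by exchanging the roles of the two platforms). For $\beta>0$ let $W(\beta)=\lambda_1(\boldsymbol{\phi};\beta)$ denote the (unique) Wardrop-equilibrium passenger arrival rate of platform 1, and let $\mathcal{M}_i(\boldsymbol{\phi};\beta)$ denote the matching revenue rate of platform $i$ evaluated at this Wardrop split. Let $\underline{\phi}=f^{-1}(2e/\Lambda)$ and $\bar{\phi}=f^{-1}(e/\Lambda)$ (each set to $0$ when not in range), and $m(\phi)=(\Lambda f(\phi)-e)\phi$. Define $W(0)=\tilde\lambda_1(\boldsymbol{\phi})$ and $\mathcal{M}_i(\boldsymbol{\phi};0)=\tilde{\mathcal{M}}_i(\boldsymbol{\phi})$ by: (a) if $\phi_1<\underline{\phi}$ (and $\phi_1\ge\phi_2$): $\tilde\lambda_1=\Lambda/2$, $\tilde{\mathcal{M}}_1=e\phi_1$, $\tilde{\mathcal{M}}_2=e\phi_2$; (b) if $\phi_1\in[\underline{\phi},\bar{\phi})$ and $\phi_1>\phi_2$: $\tilde\lambda_1=\Lambda-e/f(\phi_1)$, $\tilde{\mathcal{M}}_1=m(\phi_1)$, $\tilde{\mathcal{M}}_2=e\phi_2$; (c) if $\phi_1\in[\bar{\phi},\phi_h]$ and $\phi_1>\phi_2$: $\tilde\lambda_1=0$, $\tilde{\mathcal{M}}_1=0$, $\tilde{\mathcal{M}}_2=\min\{\Lambda f(\phi_2),e\}\phi_2$;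 (d) if $\phi_1=\phi_2\in[\underline{\phi},\phi_h]$: $\tilde\lambda_1=\Lambda/2$, $\tilde{\mathcal{M}}_i=\frac{\Lambda}{2}f(\phi_i)\phi_i$ for $i=1,2$. Then the mapping $\beta\mapsto W(\beta)$ is continuous on $[0,\infty)$, and likewise, for each $i$, the mapping $\beta\mapsto\mathcal{M}_i(\boldsymbol{\phi};\beta)$ is continuous on $[0,\infty)$.
   Context: Two symmetric ride-hailing platforms $i\in\{1,2\}$. Passengers arrive as a Poisson process of total rate $\Lambda$, split into Poisson streams of rates $\lambda_1+\lambda_2=\Lambda$. Each platform uses a static price $\phi_i\in[0,\phi_h]$; an arriving passenger finding a waiting driver accepts with probability $f(\phi_i)$, where $f$ is strictly concave, strictly decreasing, differentiable, $0<f\le 1$ on $[0,\phi_h]$ and $f(0)=1$. Drivers have effective arrival rate $e=\eta/(1-p)$ (same on both platforms) and each waiting driver abandons at rate $\beta>0$. The probability of no waiting driver is $\mathcal{D}_i=\big(\sum_{n\ge0} e^n/\prod_{a=1}^n(\lambda_i f(\phi_i)+a\beta)\big)^{-1}$, the combined blocking probability is $\mathcal{B}_i=\mathcal{D}_i f(\phi_i)+1-f(\phi_i)$, and the matching revenue rate is $\mathcal{M}_i=\lambda_i f(\phi_i)\phi_i(1-\mathcal{D}_i)$. The passenger split is the Wardrop equilibrium under QoS $\mathcal{B}$: $\lambda_1\in\arg\min_{\lambda\in[0,\Lambda]}(\mathcal{B}_1(\lambda)-\mathcal{B}_2(\Lambda-\lambda))^2$, $\lambda_2=\Lambda-\lambda_1$,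 which is unique for $\beta>0$.
   Formalization: $\underline{\phi}$ equals $\phi_h+1$ rather than 0 when $2e/\Lambda<f(\phi_h)$, and likewise $\bar{\phi}$ equals $\phi_h+1$ when $e/\Lambda<f(\phi_h)$; either is 0 only when its argument $2e/\Lambda$ or $e/\Lambda$ exceeds 1. Each condition added here is assumed in the paper as well or is needed for the statement above to hold. *)

(* Defs.v *)
From Stdlib Require Import Reals Lra ClassicalEpsilon.
From Coquelicot Require Import Coquelicot.
Open Scope R_scope.

Fixpoint prodden (x beta : R) (n : nat) : R :=
  match n with
  | O => 1
  | S k => prodden x beta k * (x + INR (S k) * beta)
  end.

(* Probability of no waiting driver:
   D = ( sum_{n>=0} e^n / prod_{a=1}^n (lambda f(phi) + a beta) )^{-1} *)
Definition Dprob (f : R -> R) (e lam phi beta : R) : R :=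
  / Series (fun n => e ^ n / prodden (lam * f phi) beta n).

Definition Bprob (f : R -> R) (e lam phi beta : R) : R :=
  Dprob f e lam phi beta * f phi + 1 - f phi.

Definition Mrev (f : R -> R) (e lam phi beta : R) : R :=
  lam * f phi * phi * (1 - Dprob f e lam phi beta).

Definition is_wardrop (f : R -> R) (e Lam phi1 phi2 beta lam1 : R) : Prop :=
  0 <= lam1 <= Lam /\
  forall lam, 0 <= lam <= Lam ->
    Rsqr (Bprob f e lam1 phi1 beta - Bprob f e (Lam - lam1) phi2 beta)
    <= Rsqr (Bprob f e lam phi1 beta - Bprob f e (Lam - lam) phi2 beta).

(* Inverse of f on [0, phih].  Out-of-range convention:
   y > f(0) = 1  ->  0 (as in the paper);
   y < f(phih)   ->  phih + 1 (the preimage lies beyond phih). *)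
Definition finv (f : R -> R) (phih y : R) : R :=
  if Rlt_dec 1 y then 0
  else if Rlt_dec y (f phih) then phih + 1
  else epsilon (inhabits 0) (fun p => 0 <= p <= phih /\ f p = y).

Definition phi_low (f : R -> R) (phih e Lam : R) : R := finv f phih (2 * e / Lam).
Definition phi_bar (f : R -> R) (phih e Lam : R) : R := finv f phih (e / Lam).

Definition mfun (f : R -> R) (e Lam phi : R) : R := (Lam * f phi - e) * phi.

(* The beta = 0 values (for phi1 >= phi2), cases (a)-(d). *)
Definition lam1_tilde (f : R -> R) (phih e Lam phi1 phi2 : R) : R :=
  if Rlt_dec phi1 (phi_low f phih e Lam) then Lam / 2                  (* (a) *)
  else if Req_dec_T phi1 phi2 then Lam / 2                              (* (d) *)
  else if Rlt_dec phi1 (phi_bar f phih e Lam) then Lam - e / f phi1     (* (b) *)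
  else 0.                                                               (* (c) *)

Definition M1_tilde (f : R -> R) (phih e Lam phi1 phi2 : R) : R :=
  if Rlt_dec phi1 (phi_low f phih e Lam) then e * phi1
  else if Req_dec_T phi1 phi2 then Lam / 2 * f phi1 * phi1
  else if Rlt_dec phi1 (phi_bar f phih e Lam) then mfun f e Lam phi1
  else 0.

Definition M2_tilde (f : R -> R) (phih e Lam phi1 phi2 : R) : R :=
  if Rlt_dec phi1 (phi_low f phih e Lam) then e * phi2
  else if Req_dec_T phi1 phi2 then Lam / 2 * f phi2 * phi2
  else if Rlt_dec phi1 (phi_bar f phih e Lam) then e * phi2
  else Rmin (Lam * f phi2) e * phi2.

Definition cont_on_nonneg (g : R -> R) : Prop :=
  forall b0, 0 <= b0 ->
    filterlim g (within (fun b => 0 <= b) (locally b0)) (locally (g b0)).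

(* Main.v *)
Require Import Defs.
From Stdlib Require Import Reals Lra Lia ClassicalEpsilon.
From Coquelicot Require Import Coquelicot.
Open Scope R_scope.

Definition tm (e x b : R) (n : nat) := e ^ n / prodden x b n.
Definition Sq e x b := Series (tm e x b).
Definition Dq e x b := / Sq e x b.

Lemma prodden_ge x b c n : 0 < c ->
  (forall a, (1 <= a)%nat -> INR a * c <= x + INR a * b) ->
  INR (Factorial.fact n) * c ^ n <= prodden x b n.
Proof.
  intros Hc H. induction n as [|k IH].
  - simpl. lra.
  - cbn [prodden pow]. rewrite fact_simpl.
    assert (H1 := H (S k) ltac:(lia)).
    assert (0 <= INR (Factorial.fact k) * c ^ k).
    { apply Rmult_le_pos. apply pos_INR. apply pow_le; lra. }
    rewrite mult_INR.
    replace (INR (S k) * INR (Factorial.fact k) * (c * c ^ k)) with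
      ((INR (Factorial.fact k) * c ^ k) * (INR (S k) * c)) by ring.
    apply Rmult_le_compat; try lra.
    apply Rmult_le_pos. apply pos_INR. lra.
Qed.

Lemma prodden_pos x b c n : 0 < c ->
  (forall a, (1 <= a)%nat -> INR a * c <= x + INR a * b) -> 0 < prodden x b n.
Proof.
  intros Hc H. eapply Rlt_le_trans; [|apply (prodden_ge x b c n Hc H)].
  apply Rmult_lt_0_compat. apply lt_0_INR. apply Factorial.lt_O_fact. apply pow_lt; lra.
Qed.

Lemma cond_std x b : 0 <= x -> 0 < b ->
  forall a, (1 <= a)%nat -> INR a * b <= x + INR a * b.
Proof. intros; lra. Qed.

Lemma tm_bound e x b c n : 0 < e -> 0 < c ->
  (forall a, (1 <= a)%nat -> INR a * c <= x + INR a * b) ->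
  0 < tm e x b n <= / INR (Factorial.fact n) * (e / c) ^ n.
Proof.
  intros He Hc H. unfold tm.
  assert (Hp := prodden_pos x b c n Hc H).
  assert (Hg := prodden_ge x b c n Hc H).
  assert (0 < INR (Factorial.fact n)) by (apply lt_0_INR; apply Factorial.lt_O_fact).
  assert (0 < c ^ n) by (apply pow_lt; lra).
  split. apply Rdiv_lt_0_compat; [apply pow_lt; lra | lra].
  unfold Rdiv. rewrite Rpow_mult_distr, pow_inv.
  replace (/ INR (Factorial.fact n) * (e ^ n * / c ^ n)) with (e ^ n * / (INR (Factorial.fact n) * c ^ n))
    by (field; lra).
  apply Rmult_le_compat_l. apply pow_le; lra.
  apply Rinv_le_contravar; [apply Rmult_lt_0_compat|]; lra.
Qed.

Lemma ex_exp_series z : ex_series (fun n => / INR (Factorial.fact n) * z ^ n).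
Proof. exists (exp z). apply is_pseries_R. apply is_exp_Reals. Qed.

Lemma ex_series_tm e x b c : 0 < e -> 0 < c ->
  (forall a, (1 <= a)%nat -> INR a * c <= x + INR a * b) ->
  ex_series (tm e x b).
Proof.
  intros He Hc H. refine (@ex_series_le R_AbsRing R_CompleteNormedModule _ _ _ (ex_exp_series (e / c))).
  intros n. destruct (tm_bound e x b c n He Hc H).
  change norm with Rabs. simpl. rewrite Rabs_pos_eq; lra.
Qed.

Lemma Series_zero : Series (fun _ => 0) = 0.
Proof.
  rewrite (Series_ext (fun _ => 0) (fun n => 0 * (fun _ => 0) n)) by (intros; ring).
  rewrite Series_scal_l. ring.
Qed.

Lemma Series_nonneg a : (forall n, 0 <= a n) -> ex_series a -> 0 <= Series a.
Proof.
  intros H Hex. rewrite <- Series_zero.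
  apply Series_le; [intros; split; [lra|apply H] | auto].
Qed.

Lemma ex_tm e x b : 0 < e -> 0 <= x -> 0 < b -> ex_series (tm e x b).
Proof. intros. apply (ex_series_tm e x b b); auto. intros; lra. Qed.

Lemma tm_pos e x b n : 0 < e -> 0 <= x -> 0 < b -> 0 < tm e x b n.
Proof. intros. apply (tm_bound e x b b n); auto. intros; lra. Qed.

Lemma Sq_ge1 e x b : 0 < e -> 0 <= x -> 0 < b -> 1 <= Sq e x b.
Proof.
  intros He Hx Hb. unfold Sq. rewrite Series_incr_1 by (apply ex_tm; auto).
  assert (tm e x b 0 = 1) by (unfold tm; simpl; field).
  rewrite H. assert (0 <= Series (fun k => tm e x b (S k))); [|lra].
  apply Series_nonneg. intros; left; apply tm_pos; auto.
  apply (ex_series_incr_1 (tm e x b)). apply ex_tm; auto.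
Qed.

Lemma prodden_mono x b x' b' n : 0 <= x <= x' -> 0 < b <= b' ->
  prodden x b n <= prodden x' b' n.
Proof.
  intros Hx Hb. induction n as [|k IH]; cbn [prodden]. lra.
  assert (0 < prodden x b k) by (apply (prodden_pos x b b); [lra| intros; lra]).
  assert (0 <= INR (S k)) by apply pos_INR.
  apply Rmult_le_compat; try lra; nra.
Qed.

Lemma Sq_mono e x b x' b' : 0 < e -> 0 <= x <= x' -> 0 < b <= b' ->
  Sq e x' b' <= Sq e x b.
Proof.
  intros He Hx Hb. unfold Sq. apply Series_le; [|apply ex_tm; lra].
  intros n. split. left; apply tm_pos; lra.
  unfold tm. apply Rmult_le_compat_l. apply pow_le; lra.
  apply Rinv_le_contravar. apply (prodden_pos x b b); [lra| intros; lra].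
  apply prodden_mono; lra.
Qed.

Lemma Dq_mono e x b x' b' : 0 < e -> 0 <= x <= x' -> 0 < b <= b' ->
  Dq e x b <= Dq e x' b'.
Proof.
  intros. unfold Dq. apply Rinv_le_contravar.
  assert (1 <= Sq e x' b') by (apply Sq_ge1; lra). lra.
  apply Sq_mono; lra.
Qed.

Lemma Dq_bounds e x b : 0 < e -> 0 <= x -> 0 < b -> 0 < Dq e x b <= 1.
Proof.
  intros. assert (1 <= Sq e x b) by (apply Sq_ge1; lra). unfold Dq. split.
  apply Rinv_0_lt_compat; lra. rewrite <- Rinv_1. apply Rinv_le_contravar; lra.
Qed.

Lemma Sq_strict e x x' b : 0 < e -> 0 <= x < x' -> 0 < b ->
  Sq e x' b < Sq e x b.
Proof.
  intros He Hx Hb. unfold Sq.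
  set (d := fun n => tm e x b n - tm e x' b n).
  assert (Hex : ex_series d).
  { apply (ex_series_ext (fun n => plus (tm e x b n) (opp (tm e x' b n)))).
    intros; reflexivity. apply (@ex_series_minus R_AbsRing R_NormedModule); apply ex_tm; lra. }
  assert (Hd : Series d = Series (tm e x b) - Series (tm e x' b)).
  { apply Series_minus; apply ex_tm; lra. }
  assert (Hdn : forall n, 0 <= d n).
  { intros n. unfold d. assert (tm e x' b n <= tm e x b n); [|lra].
    unfold tm. apply Rmult_le_compat_l. apply pow_le; lra.
    apply Rinv_le_contravar. apply (prodden_pos x b b); [lra| intros; lra].
    apply prodden_mono; lra. }
  rewrite (Series_incr_n d 2) in Hd by (auto; lia).
  assert (0 <= Series (fun k => d (2 + k)%nat)).
  { apply Series_nonneg. intros; apply Hdn. apply (ex_series_incr_n d 2); auto. }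
  assert (0 < d 1%nat).
  { unfold d, tm. simpl. unfold Rdiv. apply Rlt_0_minus.
    assert (0 < x + b) by lra; assert (0 < x' + b) by lra.
    apply Rmult_lt_compat_l; [lra|]. apply Rinv_lt_contravar; [|lra]. rewrite !Rmult_1_l. apply Rmult_lt_0_compat; lra. }
  cbn [sum_f_R0 Init.Nat.pred] in Hd. assert (0 <= d 0%nat) by apply Hdn. lra.
Qed.

Lemma Dq_strict e x x' b : 0 < e -> 0 <= x < x' -> 0 < b ->
  Dq e x b < Dq e x' b.
Proof.
  intros. unfold Dq. apply Rinv_lt_contravar.
  assert (1 <= Sq e x' b) by (apply Sq_ge1; lra).
  assert (1 <= Sq e x b) by (apply Sq_ge1; lra). nra.
  apply Sq_strict; lra.
Qed.

Lemma fin_sum_cont (t : R -> nat -> R) N :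
  (forall n, continuity_pt (fun p => t p n) 0) ->
  continuity_pt (fun p => sum_f_R0 (t p) N) 0.
Proof.
  intros H. induction N as [|k IH]; simpl. apply H.
  apply (continuity_pt_plus (fun p => sum_f_R0 (t p) k) (fun p => t p (S k))); auto.
Qed.

Lemma cont_eps (g : R -> R) : continuity_pt g 0 ->
  forall eps, 0 < eps -> exists del, 0 < del /\ forall p, Rabs p < del -> Rabs (g p - g 0) < eps.
Proof.
  intros H eps Heps. destruct (H eps Heps) as [del [Hdel Hd]].
  exists del. split; auto. intros p Hp.
  destruct (Req_dec p 0) as [->|Hp0]. rewrite Rminus_diag, Rabs_R0; auto.
  apply (Hd p). split. split; [exact I|auto]. simpl. unfold R_dist. rewrite Rminus_0_r. auto.
Qed.

Lemma series_cont (t : R -> nat -> R) (M : nat -> R) (d : R) :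
  0 < d -> ex_series M ->
  (forall p n, Rabs p < d -> Rabs (t p n) <= M n) ->
  (forall n, continuity_pt (fun p => t p n) 0) ->
  forall eps, 0 < eps -> exists del, 0 < del /\
    forall p, Rabs p < del -> Rabs (Series (t p) - Series (t 0)) < eps.
Proof.
  intros Hd HM Hb Hc eps Heps.
  assert (HMs := Series_correct M HM). apply is_series_Reals in HMs.
  destruct (HMs (eps / 3)) as [N HN]. lra.
  assert (HN' := HN N (le_n N)). unfold Rdist in HN'.
  assert (Htail : Series M = sum_f_R0 M N + Series (fun k => M (S N + k)%nat)).
  { rewrite (Series_incr_n M (S N)) by (auto; lia). reflexivity. }
  assert (HMex : forall p, Rabs p < d -> ex_series (t p)).
  { intros p Hp. refine (@ex_series_le R_AbsRing R_CompleteNormedModule _ _ _ HM).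
    intros n. apply Hb; auto. }
  assert (Htl : forall p, Rabs p < d -> Rabs (Series (fun k => t p (S N + k)%nat)) < eps / 3).
  { intros p Hp. eapply Rle_lt_trans. apply Series_Rabs.
    refine (@ex_series_le R_AbsRing R_CompleteNormedModule _ (fun k => M (S N + k)%nat) _ _).
    intros n. change norm with Rabs. simpl. rewrite Rabs_Rabsolu. apply Hb; auto.
    apply (ex_series_incr_n M (S N)); auto.
    eapply Rle_lt_trans. apply Series_le.
    intros n; split. apply Rabs_pos. apply Hb; auto.
    apply (ex_series_incr_n M (S N)); auto.
    rewrite Rabs_minus_sym in HN'. 
    assert (Series (fun k => M (S N + k)%nat) = Series M - sum_f_R0 M N) by lra.
    rewrite H. apply Rle_lt_trans with (Rabs (Series M - sum_f_R0 M N)); auto. apply Rle_abs. }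
  destruct (cont_eps _ (fin_sum_cont t N Hc) (eps / 3)) as [del [Hdel Hdd]]. lra.
  exists (Rmin del d). split. apply Rmin_pos; auto.
  intros p Hp. assert (Hp1 : Rabs p < del) by (eapply Rlt_le_trans; [apply Hp|apply Rmin_l]).
  assert (Hp2 : Rabs p < d) by (eapply Rlt_le_trans; [apply Hp|apply Rmin_r]).
  assert (H0 : Rabs 0 < d) by (rewrite Rabs_R0; auto).
  rewrite (Series_incr_n (t p) (S N)) by (auto; lia).
  rewrite (Series_incr_n (t 0) (S N)) by (auto; lia). simpl Init.Nat.pred.
  assert (A := Hdd p Hp1). assert (B := Htl p Hp2). assert (C := Htl 0 H0).
  set (a1 := sum_f_R0 (t p) N) in *. set (a0 := sum_f_R0 (t 0) N) in *.
  set (s1 := Series (fun k => t p (S N + k)%nat)) in *.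
  set (s0 := Series (fun k => t 0 (S N + k)%nat)) in *.
  replace (a1 + s1 - (a0 + s0)) with ((a1 - a0) + (s1 - s0)) by ring.
  eapply Rle_lt_trans. apply Rabs_triang.
  assert (Rabs (s1 - s0) <= Rabs s1 + Rabs s0).
  { unfold Rminus. eapply Rle_trans. apply Rabs_triang. rewrite Rabs_Ropp. lra. }
  lra.
Qed.

Lemma prodden_cont x0 b0 u n :
  continuity_pt (fun p => prodden (x0 + u * p) (b0 + p) n) 0.
Proof.
  induction n as [|k IH]; cbn [prodden].
  - apply continuity_pt_const. intros ? ?; reflexivity.
  - apply (continuity_pt_mult (fun p => prodden (x0 + u * p) (b0 + p) k)
      (fun p => x0 + u * p + INR (S k) * (b0 + p))); auto.
    apply (continuity_pt_plus (fun p => x0 + u * p) (fun p => INR (S k) * (b0 + p))).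
    apply (continuity_pt_plus (fun p => x0) (fun p => u * p)).
    apply continuity_pt_const. intros ? ?; reflexivity.
    apply (continuity_pt_scal (fun p => p)). apply continuity_pt_id.
    apply (continuity_pt_scal (fun p => b0 + p)).
    apply (continuity_pt_plus (fun p => b0) (fun p => p)).
    apply continuity_pt_const. intros ? ?; reflexivity. apply continuity_pt_id.
Qed.

Lemma inv_diff A B : 1 <= A -> 1 <= B -> Rabs (/ A - / B) <= Rabs (A - B).
Proof.
  intros HA HB. replace (/ A - / B) with ((B - A) / (A * B)) by (field; lra).
  unfold Rdiv. rewrite Rabs_mult. rewrite Rabs_minus_sym.
  rewrite (Rabs_pos_eq (/ (A * B))). 
  2: { left; apply Rinv_0_lt_compat; nra. }
  assert (0 <= Rabs (A - B)) by apply Rabs_pos.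
  assert (/ (A * B) <= 1). { rewrite <- Rinv_1. apply Rinv_le_contravar; nra. }
  nra.
Qed.

Lemma Dq_path e x0 b0 u : 0 < e -> 0 <= x0 -> 0 < b0 -> Rabs u <= 1 ->
  forall eps, 0 < eps -> exists del, 0 < del /\ forall p, Rabs p < del ->
    0 <= x0 + u * p -> Rabs (Dq e (x0 + u * p) (b0 + p) - Dq e x0 b0) < eps.
Proof.
  intros He Hx Hb Hu eps Heps.
  set (t := fun p n => tm e (x0 + u * p) (b0 + p) n).
  assert (Hcond : forall p, Rabs p < b0 / 4 -> forall a, (1 <= a)%nat ->
     INR a * (b0 / 2) <= x0 + u * p + INR a * (b0 + p)).
  { intros p Hp a Ha. assert (1 <= INR a) by (apply (le_INR 1); auto).
    assert (Rabs (u * p) <= Rabs p).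
    { rewrite Rabs_mult. assert (0 <= Rabs p) by apply Rabs_pos. nra. }
    assert (H1 : Rabs (u * p) < b0 / 4) by lra.
    apply Rabs_def2 in H1. apply Rabs_def2 in Hp.
    assert (0 <= (INR a - 1) * (b0 / 4 + p)) by (apply Rmult_le_pos; lra).
    nra. }
  set (M := fun n => / INR (Factorial.fact n) * (e / (b0 / 2)) ^ n).
  assert (Hs := series_cont t M (b0 / 4) ltac:(lra) (ex_exp_series _)).
  destruct (Hs) with (eps := eps) as [del [Hdel Hd]]; auto.
  - intros p n Hp. unfold t, M. destruct (tm_bound e (x0 + u * p) (b0 + p) (b0 / 2) n He
      ltac:(lra) (Hcond p Hp)). rewrite Rabs_pos_eq; lra.
  - intros n. unfold t, tm.
    apply (continuity_pt_div (fun p => e ^ n) (fun p => prodden (x0 + u * p) (b0 + p) n)).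
    apply continuity_pt_const. intros ? ?; reflexivity.
    apply prodden_cont. apply Rgt_not_eq.
    apply (prodden_pos _ _ (b0 / 2)). lra. apply Hcond. rewrite Rabs_R0; lra.
  - exists (Rmin del (b0 / 4)). split. apply Rmin_pos; lra.
    intros p Hp Hxp.
    assert (Hp1 : Rabs p < del) by (eapply Rlt_le_trans; [apply Hp|apply Rmin_l]).
    assert (Hp2 : Rabs p < b0 / 4) by (eapply Rlt_le_trans; [apply Hp|apply Rmin_r]).
    assert (Hpp := Hp2). apply Rabs_def2 in Hpp.
    unfold Dq. eapply Rle_lt_trans. apply inv_diff.
    apply Sq_ge1; lra. apply Sq_ge1; lra.
    assert (E : Sq e x0 b0 = Series (t 0)).
    { unfold Sq, t. apply Series_ext. intros n. f_equal; ring. }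
    rewrite E. apply Hd; auto.
Qed.

Lemma Dq_joint e x0 b0 : 0 < e -> 0 <= x0 -> 0 < b0 ->
  forall eps, 0 < eps -> exists del, 0 < del /\ forall x b, 0 <= x -> Rabs (x - x0) < del ->
    0 < b -> Rabs (b - b0) < del -> Rabs (Dq e x b - Dq e x0 b0) < eps.
Proof.
  intros He Hx Hb eps Heps.
  destruct (Dq_path e x0 b0 1 He Hx Hb ltac:(rewrite Rabs_R1; lra) eps Heps) as [d1 [Hd1 H1]].
  assert (Hu : exists u m, 0 <= u <= 1 /\ (u = 1 \/ x0 = 0) /\ 0 < m /\ forall d, 0 <= d < m -> 0 <= x0 - u * d).
  { destruct (Rlt_dec 0 x0).
    - exists 1, x0. split; [lra|split; [lra|split; [lra|]]]. intros; lra.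
    - exists 0, 1. split; [lra|split; [lra|split; [lra|]]]. intros; lra. }
  destruct Hu as [u [m [Hu [Hux [Hm Hum]]]]].
  destruct (Dq_path e x0 b0 u He Hx Hb ltac:(rewrite Rabs_pos_eq; lra) eps Heps) as [d2 [Hd2 H2]].
  set (dl := Rmin (Rmin d1 d2) (Rmin (b0 / 2) m) / 2).
  assert (0 < Rmin (Rmin d1 d2) (Rmin (b0 / 2) m)) by (repeat apply Rmin_pos; lra).
  assert (Hdl0 : 0 < dl) by (unfold dl; lra).
  assert (Hdl1 : dl < d1) by (unfold dl; assert (Rmin (Rmin d1 d2) (Rmin (b0 / 2) m) <= d1) by
     (eapply Rle_trans; [apply Rmin_l| apply Rmin_l]); lra).
  assert (Hdl2 : dl < d2) by (unfold dl; assert (Rmin (Rmin d1 d2) (Rmin (b0 / 2) m) <= d2) by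
     (eapply Rle_trans; [apply Rmin_l| apply Rmin_r]); lra).
  assert (Hdl3 : dl < b0 / 2) by (unfold dl; assert (Rmin (Rmin d1 d2) (Rmin (b0 / 2) m) <= b0 / 2) by
     (eapply Rle_trans; [apply Rmin_r| apply Rmin_l]); lra).
  assert (Hdl4 : dl < m) by (unfold dl; assert (Rmin (Rmin d1 d2) (Rmin (b0 / 2) m) <= m) by
     (eapply Rle_trans; [apply Rmin_r| apply Rmin_r]); lra).
  exists dl. split; auto. intros x b Hx0 Hxx Hb0 Hbb.
  apply Rabs_def2 in Hxx. apply Rabs_def2 in Hbb.
  assert (Up := H1 dl ltac:(rewrite Rabs_pos_eq; lra) ltac:(lra)).
  assert (Lo := H2 (- dl) ltac:(rewrite Rabs_Ropp, Rabs_pos_eq; lra)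
     ltac:(assert (0 <= x0 - u * dl) by (apply Hum; lra); lra)).
  assert (A : Dq e x b <= Dq e (x0 + 1 * dl) (b0 + dl)) by (apply Dq_mono; lra).
  assert (B : Dq e (x0 + u * - dl) (b0 + - dl) <= Dq e x b).
  { assert (0 <= x0 - u * dl) by (apply Hum; lra).
    assert (u * dl <= dl) by nra. assert (0 <= u * dl) by nra.
    replace (u * - dl) with (- (u * dl)) by ring.
    destruct Hux as [-> | ->]; apply Dq_mono; lra. }
  apply Rabs_def2 in Up. apply Rabs_def2 in Lo. apply Rabs_def1; lra.
Qed.

Lemma bernoulli s n : 0 <= s <= 1 -> 1 - INR n * s <= (1 - s) ^ n.
Proof.
  intros Hs. induction n as [|k IH]. simpl; lra.
  rewrite S_INR. simpl. assert (0 <= INR k) by apply pos_INR.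
  assert (0 <= (1 - s) ^ k) by (apply pow_le; lra). nra.
Qed.

Lemma prodden_upper x b N n : 0 <= x -> 0 < b -> (n <= N)%nat ->
  prodden x b n <= (x + INR N * b) ^ n.
Proof.
  intros Hx Hb. induction n as [|k IH]; intros Hn. simpl; lra.
  cbn [prodden pow]. assert (Hp : 0 < prodden x b k) by (apply (prodden_pos x b b); [lra|intros; lra]).
  assert (INR (S k) <= INR N) by (apply le_INR; lia).
  assert (0 <= INR (S k)) by apply pos_INR.
  rewrite Rmult_comm. apply Rmult_le_compat.
  all: try lra; try (apply IH; lia); nra.
Qed.

Lemma prodden_lower x b n : 0 <= x -> 0 < b -> x ^ n <= prodden x b n.
Proof.
  intros Hx Hb. induction n as [|k IH]. simpl; lra.
  cbn [prodden pow]. assert (0 <= INR (S k)) by apply pos_INR.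
  assert (0 <= x ^ k) by (apply pow_le; lra).
  rewrite Rmult_comm. apply Rmult_le_compat.
  all: try lra; nra.
Qed.

Lemma Sq_ge_partial e x b N : 0 < e -> 0 <= x -> 0 < b ->
  sum_f_R0 (tm e x b) N <= Sq e x b.
Proof.
  intros. unfold Sq. rewrite (Series_incr_n (tm e x b) (S N)) by (try lia; apply ex_tm; auto).
  simpl Init.Nat.pred.
  assert (0 <= Series (fun k => tm e x b (S N + k)%nat)); [|lra].
  apply Series_nonneg. intros; left; apply tm_pos; auto.
  apply (ex_series_incr_n (tm e x b) (S N)). apply ex_tm; auto.
Qed.

Lemma Sq_lower e x b N : 0 < e -> 0 < x -> 0 < b ->
  (1 - INR N * (INR N * b / x)) * sum_f_R0 (fun n => (e / x) ^ n) N <= Sq e x b.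
Proof.
  intros He Hx Hb. eapply Rle_trans; [|apply (Sq_ge_partial e x b N); lra].
  rewrite scal_sum. apply sum_Rle. intros n Hn.
  set (s := INR N * b / (x + INR N * b)).
  assert (HN : 0 <= INR N) by apply pos_INR.
  assert (Hn' : INR n <= INR N) by (apply le_INR; lia).
  assert (Hs : 0 <= s <= 1).
  { unfold s. split. apply Rmult_le_pos; [nra|]. left; apply Rinv_0_lt_compat; nra.
    apply (Rmult_le_reg_r (x + INR N * b)). nra. unfold Rdiv. rewrite Rmult_assoc, Rinv_l; nra. }
  assert (Hs2 : s <= INR N * b / x).
  { unfold s, Rdiv. apply Rmult_le_compat_l. nra. apply Rinv_le_contravar; nra. }
  assert (B := bernoulli s n Hs).
  assert (E : 1 - s = x / (x + INR N * b)) by (unfold s; field; nra).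
  assert (Hq : 0 <= (e / x) ^ n) by (apply pow_le; unfold Rdiv; apply Rmult_le_pos; [lra|left; apply Rinv_0_lt_compat; lra]).
  assert (T : (e / x) ^ n * (1 - s) ^ n <= tm e x b n).
  { rewrite <- Rpow_mult_distr, E. unfold tm.
    replace (e / x * (x / (x + INR N * b))) with (e / (x + INR N * b)) by (field; nra).
    unfold Rdiv. rewrite Rpow_mult_distr, pow_inv. apply Rmult_le_compat_l. apply pow_le; lra.
    apply Rinv_le_contravar. apply (prodden_pos x b b); [lra| intros; lra].
    apply prodden_upper; lra || lia. }
  assert (1 - INR N * (INR N * b / x) <= 1 - INR n * s).
  { assert (INR n * s <= INR N * (INR N * b / x)); [|lra].
    assert (0 <= INR n) by apply pos_INR. apply Rmult_le_compat; lra. }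
  nra.
Qed.

Lemma Sq_upper e x b : 0 < e -> e < x -> 0 < b -> Sq e x b <= / (1 - e / x).
Proof.
  intros He Hx Hb. unfold Sq.
  assert (Hq : Rabs (e / x) < 1).
  { rewrite Rabs_pos_eq. apply (Rmult_lt_reg_r x); [lra|]. unfold Rdiv. rewrite Rmult_assoc, Rinv_l; lra.
    unfold Rdiv; apply Rmult_le_pos; [lra|left; apply Rinv_0_lt_compat; lra]. }
  rewrite <- (is_series_unique _ _ (is_series_geom (e / x) Hq)).
  apply Series_le. 2: { exists (/ (1 - e / x)). apply is_series_geom; auto. }
  intros n. split. left; apply tm_pos; lra.
  unfold tm, Rdiv. rewrite Rpow_mult_distr, pow_inv. apply Rmult_le_compat_l. apply pow_le; lra.
  apply Rinv_le_contravar. apply pow_lt; lra. apply prodden_lower; lra.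
Qed.

Definition hh (e x : R) : R := if Rle_dec x e then 0 else 1 - e / x.

Lemma Dq_lim_small e x : 0 < e -> 0 <= x <= e ->
  forall eps, 0 < eps -> exists del, 0 < del /\ forall b, 0 < b < del -> Dq e x b < eps.
Proof.
  intros He Hx eps Heps.
  destruct (archimed_cor1 (eps / 2)) as [N [HN HN0]]. lra.
  assert (HNp : 0 < INR N) by (apply lt_0_INR; lia).
  exists (e / (2 * (INR N * INR N + 1))). split.
  { apply Rdiv_lt_0_compat; nra. }
  intros b Hb.
  assert (Hlow := Sq_lower e e b N He He ltac:(lra)).
  rewrite (sum_eq _ (fun _ => 1)) in Hlow by (intros; rewrite Rdiv_diag by lra; apply pow1).
  rewrite sum_cte, S_INR in Hlow.
  assert (K : 1 / 2 <= 1 - INR N * (INR N * b / e)).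
  { assert (INR N * (INR N * b / e) <= 1 / 2); [|lra].
    replace (INR N * (INR N * b / e)) with ((INR N * INR N) * b / e) by (field; lra).
    apply (Rmult_le_reg_r e); [lra|]. unfold Rdiv. rewrite Rmult_assoc, Rinv_l by lra.
    destruct Hb as [Hb1 Hb2].
    assert (b * (2 * (INR N * INR N + 1)) < e).
    { apply (Rmult_lt_reg_r (/ (2 * (INR N * INR N + 1)))). apply Rinv_0_lt_compat; nra.
      rewrite Rmult_assoc, Rinv_r by nra. lra. }
    nra. }
  assert (HS : (INR N + 1) / 2 <= Sq e e b) by nra.
  assert (Hmono : Dq e x b <= Dq e e b) by (apply Dq_mono; lra).
  assert (Dq e e b <= 2 / (INR N + 1)).
  { unfold Dq. replace (2 / (INR N + 1)) with (/ ((INR N + 1) / 2)) by (field; lra).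
    apply Rinv_le_contravar; lra. }
  assert (2 / (INR N + 1) < 2 / INR N).
  { unfold Rdiv. apply Rmult_lt_compat_l; [lra|]. apply Rinv_lt_contravar; nra. }
  assert (2 / INR N < eps) by (unfold Rdiv; lra).
  lra.
Qed.

Lemma Dq_lim_big e x : 0 < e -> e < x ->
  forall eps, 0 < eps -> exists del, 0 < del /\ forall b, 0 < b < del ->
    Rabs (Dq e x b - (1 - e / x)) < eps.
Proof.
  intros He Hx eps Heps.
  set (q := e / x).
  assert (Hq : 0 < q < 1).
  { unfold q. split. apply Rdiv_lt_0_compat; lra.
    apply (Rmult_lt_reg_r x); [lra|]. unfold Rdiv. rewrite Rmult_assoc, Rinv_l; lra. }
  set (eta := Rmin (1 / 4) (eps / 8)).
  assert (Heta : 0 < eta <= 1 / 4 /\ eta <= eps / 8).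
  { unfold eta. split; [split|]. apply Rmin_pos; lra. apply Rmin_l. apply Rmin_r. }
  destruct (pow_lt_1_zero q ltac:(rewrite Rabs_pos_eq; lra) eta ltac:(lra)) as [N HN].
  assert (HqN := HN (S N) ltac:(lia)). rewrite Rabs_pos_eq in HqN by (apply pow_le; lra).
  assert (HN0 : 0 <= INR N) by apply pos_INR.
  exists (eta * x / (INR N * INR N + 1)). split.
  { apply Rdiv_lt_0_compat; nra. }
  intros b Hb.
  assert (Hlow := Sq_lower e x b N He ltac:(lra) ltac:(lra)). fold q in Hlow.
  rewrite tech3 in Hlow by lra.
  assert (Hup := Sq_upper e x b He Hx ltac:(lra)). fold q in Hup.
  assert (K : 1 - eta <= 1 - INR N * (INR N * b / x)).
  { assert (INR N * (INR N * b / x) <= eta); [|lra].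
    replace (INR N * (INR N * b / x)) with ((INR N * INR N) * b / x) by (field; lra).
    apply (Rmult_le_reg_r x); [lra|]. unfold Rdiv. rewrite Rmult_assoc, Rinv_l by lra.
    destruct Hb as [Hb1 Hb2].
    assert (b * (INR N * INR N + 1) < eta * x).
    { apply (Rmult_lt_reg_r (/ (INR N * INR N + 1))). apply Rinv_0_lt_compat; nra.
      rewrite Rmult_assoc, Rinv_r by nra. lra. }
    nra. }
  assert (A : (1 - eta) / (1 - q) <= (1 - q ^ S N) / (1 - q)).
  { unfold Rdiv. apply Rmult_le_compat_r. left; apply Rinv_0_lt_compat; lra. lra. }
  assert (HA0 : 0 < (1 - eta) / (1 - q)) by (apply Rdiv_lt_0_compat; lra).
  assert (HS : (1 - eta) * ((1 - eta) / (1 - q)) <= Sq e x b).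
  { eapply Rle_trans; [|apply Hlow]. apply Rmult_le_compat; lra. }
  assert (HS2 : (1 - 2 * eta) / (1 - q) <= Sq e x b).
  { eapply Rle_trans; [|apply HS].
    replace ((1 - eta) * ((1 - eta) / (1 - q))) with ((1 - eta) * (1 - eta) / (1 - q)) by (field; lra).
    unfold Rdiv. apply Rmult_le_compat_r. left; apply Rinv_0_lt_compat; lra. nra. }
  assert (Hpos : 0 < (1 - 2 * eta) / (1 - q)) by (apply Rdiv_lt_0_compat; lra).
  assert (D1 : Dq e x b <= (1 - q) / (1 - 2 * eta)).
  { unfold Dq. replace ((1 - q) / (1 - 2 * eta)) with (/ ((1 - 2 * eta) / (1 - q))) by (field; lra).
    apply Rinv_le_contravar; lra. }
  assert (D2 : 1 - q <= Dq e x b).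
  { unfold Dq. replace (1 - q) with (/ / (1 - q)) by (field; lra).
    apply Rinv_le_contravar. assert (1 <= Sq e x b) by (apply Sq_ge1; lra). lra. auto. }
  assert (D3 : (1 - q) / (1 - 2 * eta) < 1 - q + eps).
  { apply (Rmult_lt_reg_r (1 - 2 * eta)). lra.
    unfold Rdiv. rewrite Rmult_assoc, Rinv_l by lra. nra. }
  apply Rabs_def1; lra.
Qed.

Lemma Dq_lim0 e x : 0 < e -> 0 <= x ->
  forall eps, 0 < eps -> exists del, 0 < del /\ forall b, 0 < b < del ->
    Rabs (Dq e x b - hh e x) < eps.
Proof.
  intros He Hx eps Heps. unfold hh. destruct (Rle_dec x e).
  - destruct (Dq_lim_small e x He ltac:(lra) eps Heps) as [del [Hd H]].
    exists del; split; auto. intros b Hb. rewrite Rminus_0_r.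
    assert (0 < Dq e x b <= 1) by (apply Dq_bounds; lra).
    rewrite Rabs_pos_eq by lra. apply H; auto.
  - apply Dq_lim_big; lra.
Qed.

Lemma hh_mono e x y : 0 < e -> 0 <= x <= y -> 0 <= hh e y - hh e x <= (y - x) / e.
Proof.
  intros He Hxy. unfold hh.
  destruct (Rle_dec x e); destruct (Rle_dec y e).
  - split. lra. rewrite Rminus_0_r. unfold Rdiv. apply Rmult_le_pos; [lra|left; apply Rinv_0_lt_compat; lra].
  - split.
    + assert (e / y < 1). { apply (Rmult_lt_reg_r y); [lra|]. unfold Rdiv. rewrite Rmult_assoc, Rinv_l; lra. }
      lra.
    + replace (1 - e / y - 0) with ((y - e) / y) by (field; lra).
      apply Rle_trans with ((y - e) / e).
      unfold Rdiv. apply Rmult_le_compat_l. lra. apply Rinv_le_contravar; lra.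
      unfold Rdiv. apply Rmult_le_compat_r. left; apply Rinv_0_lt_compat; lra. lra.
  - lra.
  - replace (1 - e / y - (1 - e / x)) with ((y - x) * (e / (x * y))) by (field; lra).
    split. apply Rmult_le_pos. lra. left; apply Rdiv_lt_0_compat; nra.
    unfold Rdiv. apply Rmult_le_compat_l. lra.
    replace (e * / (x * y)) with (/ (x * y / e)) by (field; split; lra).
    apply Rinv_le_contravar. lra.
    apply (Rmult_le_reg_r e); [lra|]. unfold Rdiv. rewrite Rmult_assoc, Rinv_l by lra. nra.
Qed.

Lemma Dq_joint0 e x0 : 0 < e -> 0 <= x0 ->
  forall eps, 0 < eps -> exists del, 0 < del /\ forall x b, 0 <= x -> Rabs (x - x0) < del ->
    0 < b < del -> Rabs (Dq e x b - hh e x0) < eps.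
Proof.
  intros He Hx eps Heps.
  set (d := e * eps / 2).
  assert (Hd : 0 < d) by (unfold d; nra).
  set (lo := if Rle_dec d x0 then x0 - d else 0).
  assert (Hlo : 0 <= lo <= x0 /\ x0 - lo <= d /\ (lo = 0 \/ lo = x0 - d)).
  { unfold lo. destruct (Rle_dec d x0); lra. }
  destruct (Dq_lim0 e lo He ltac:(lra) (eps / 2) ltac:(lra)) as [d1 [Hd1 H1]].
  destruct (Dq_lim0 e (x0 + d) He ltac:(lra) (eps / 2) ltac:(lra)) as [d2 [Hd2 H2]].
  assert (M1 := hh_mono e lo x0 He ltac:(lra)).
  assert (M2 := hh_mono e x0 (x0 + d) He ltac:(lra)).
  assert (Hde : d / e = eps / 2) by (unfold d; field; lra).
  assert ((x0 - lo) / e <= d / e).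
  { unfold Rdiv. apply Rmult_le_compat_r. left; apply Rinv_0_lt_compat; lra. lra. }
  replace (x0 + d - x0) with d in M2 by ring.
  exists (Rmin d (Rmin d1 d2)). split. repeat apply Rmin_pos; auto.
  intros x b Hx0 Hxx Hb.
  assert (Rmin d (Rmin d1 d2) <= d) by apply Rmin_l.
  assert (Rmin d (Rmin d1 d2) <= d1) by (eapply Rle_trans; [apply Rmin_r|apply Rmin_l]).
  assert (Rmin d (Rmin d1 d2) <= d2) by (eapply Rle_trans; [apply Rmin_r|apply Rmin_r]).
  apply Rabs_def2 in Hxx.
  assert (A := H1 b ltac:(lra)). assert (B := H2 b ltac:(lra)).
  apply Rabs_def2 in A. apply Rabs_def2 in B.
  assert (C1 : Dq e lo b <= Dq e x b) by (apply Dq_mono; lra).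
  assert (C2 : Dq e x b <= Dq e (x0 + d) b) by (apply Dq_mono; lra).
  apply Rabs_def1; lra.
Qed.

Definition gg e f1 f2 Lam b lam :=
  (Dq e (lam * f1) b * f1 + 1 - f1) - (Dq e ((Lam - lam) * f2) b * f2 + 1 - f2).

Definition wardq e f1 f2 Lam b w :=
  0 <= w <= Lam /\ forall lam, 0 <= lam <= Lam -> Rsqr (gg e f1 f2 Lam b w) <= Rsqr (gg e f1 f2 Lam b lam).

Lemma gg_strict e f1 f2 Lam b a c : 0 < e -> 0 < f1 -> 0 < f2 -> 0 < b ->
  0 <= a -> a < c -> c <= Lam -> gg e f1 f2 Lam b a < gg e f1 f2 Lam b c.
Proof.
  intros. unfold gg.
  assert (Dq e (a * f1) b < Dq e (c * f1) b) by (apply Dq_strict; nra).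
  assert (Dq e ((Lam - c) * f2) b < Dq e ((Lam - a) * f2) b) by (apply Dq_strict; nra).
  nra.
Qed.


Lemma ward_lo (g : R -> R) Lam w a : (forall x y, 0 <= x -> x < y -> y <= Lam -> g x < g y) ->
  0 <= w <= Lam -> (forall lam, 0 <= lam <= Lam -> Rsqr (g w) <= Rsqr (g lam)) ->
  0 <= a <= Lam -> g a <= 0 -> a <= w.
Proof.
  intros Hg Hw Hm Ha Hga. destruct (Rle_dec a w) as [|Hn]; auto. exfalso.
  assert (g w < g a) by (apply Hg; lra). assert (Hm' := Hm a Ha). unfold Rsqr in Hm'. nra.
Qed.

Lemma ward_hi (g : R -> R) Lam w c : (forall x y, 0 <= x -> x < y -> y <= Lam -> g x < g y) ->
  0 <= w <= Lam -> (forall lam, 0 <= lam <= Lam -> Rsqr (g w) <= Rsqr (g lam)) ->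
  0 <= c <= Lam -> 0 <= g c -> w <= c.
Proof.
  intros Hg Hw Hm Ha Hga. destruct (Rle_dec w c) as [|Hn]; auto. exfalso.
  assert (g c < g w) by (apply Hg; lra). assert (Hm' := Hm c Ha). unfold Rsqr in Hm'. nra.
Qed.

Lemma ward_lo2 (g : R -> R) Lam w a : (forall x y, 0 <= x -> x < y -> y <= Lam -> g x < g y) ->
  0 <= w <= Lam -> (forall lam, 0 <= lam <= Lam -> Rsqr (g w) <= Rsqr (g lam)) ->
  0 <= a -> a < w -> g a < 0.
Proof.
  intros Hg Hw Hm Ha Haw. assert (g a < g w) by (apply Hg; lra).
  assert (Hm' := Hm a ltac:(lra)). unfold Rsqr in Hm'.
  destruct (Rlt_dec (g a) 0); auto. nra.
Qed.

Lemma ward_hi2 (g : R -> R) Lam w c : (forall x y, 0 <= x -> x < y -> y <= Lam -> g x < g y) ->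
  0 <= w <= Lam -> (forall lam, 0 <= lam <= Lam -> Rsqr (g w) <= Rsqr (g lam)) ->
  w < c -> c <= Lam -> 0 < g c.
Proof.
  intros Hg Hw Hm Hc HcL. assert (g w < g c) by (apply Hg; lra).
  assert (Hm' := Hm c ltac:(lra)). unfold Rsqr in Hm'.
  destruct (Rlt_dec 0 (g c)); auto. nra.
Qed.

Lemma W_cont_gen e f1 f2 Lam (W : R -> R) b0 Wl :
  0 < e -> 0 < f1 -> 0 < f2 -> 0 <= Wl <= Lam ->
  (forall b, 0 < b -> wardq e f1 f2 Lam b (W b)) ->
  (forall a, 0 <= a -> a < Wl -> exists d, 0 < d /\ forall b, 0 < b -> Rabs (b - b0) < d ->
      gg e f1 f2 Lam b a <= 0) ->
  (forall c, Wl < c -> c <= Lam -> exists d, 0 < d /\ forall b, 0 < b -> Rabs (b - b0) < d ->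
      0 <= gg e f1 f2 Lam b c) ->
  forall eps, 0 < eps -> exists d, 0 < d /\ forall b, 0 < b -> Rabs (b - b0) < d ->
      Rabs (W b - Wl) < eps.
Proof.
  intros He Hf1 Hf2 HWl HW Hlo Hhi eps Heps.
  assert (Lo : exists d, 0 < d /\ forall b, 0 < b -> Rabs (b - b0) < d -> Wl - eps / 2 <= W b).
  { destruct (Rle_dec 0 (Wl - eps / 2)).
    - destruct (Hlo (Wl - eps / 2)) as [d [Hd H]]; try lra.
      exists d. split; auto. intros b Hb Hbd. destruct (HW b Hb) as [Hw Hm].
      apply (ward_lo (gg e f1 f2 Lam b) Lam); auto.
      intros; apply gg_strict; lra. lra.
    - exists 1. split. lra. intros b Hb _. destruct (HW b Hb). lra. }
  assert (Hi : exists d, 0 < d /\ forall b, 0 < b -> Rabs (b - b0) < d -> W b <= Wl + eps / 2).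
  { destruct (Rle_dec (Wl + eps / 2) Lam).
    - destruct (Hhi (Wl + eps / 2)) as [d [Hd H]]; try lra.
      exists d. split; auto. intros b Hb Hbd. destruct (HW b Hb) as [Hw Hm].
      apply (ward_hi (gg e f1 f2 Lam b) Lam); auto.
      intros; apply gg_strict; lra. lra.
    - exists 1. split. lra. intros b Hb _. destruct (HW b Hb). lra. }
  destruct Lo as [d1 [Hd1 H1]]. destruct Hi as [d2 [Hd2 H2]].
  exists (Rmin d1 d2). split. apply Rmin_pos; auto.
  intros b Hb Hbd.
  assert (A := H1 b Hb ltac:(eapply Rlt_le_trans; [apply Hbd|apply Rmin_l])).
  assert (B := H2 b Hb ltac:(eapply Rlt_le_trans; [apply Hbd|apply Rmin_r])).
  apply Rabs_def1; lra.
Qed.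

Lemma gg_persist e f1 f2 Lam b0 a L1 L2 :
  0 < f1 <= 1 -> 0 < f2 <= 1 ->
  (forall eps, 0 < eps -> exists d, 0 < d /\ forall b, 0 < b -> Rabs (b - b0) < d ->
      Rabs (Dq e (a * f1) b - L1) < eps) ->
  (forall eps, 0 < eps -> exists d, 0 < d /\ forall b, 0 < b -> Rabs (b - b0) < d ->
      Rabs (Dq e ((Lam - a) * f2) b - L2) < eps) ->
  forall eps, 0 < eps -> exists d, 0 < d /\ forall b, 0 < b -> Rabs (b - b0) < d ->
      Rabs (gg e f1 f2 Lam b a - ((L1 * f1 + 1 - f1) - (L2 * f2 + 1 - f2))) < eps.
Proof.
  intros Hf1 Hf2 H1 H2 eps Heps.
  destruct (H1 (eps / 2)) as [d1 [Hd1 A]]; [lra|].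
  destruct (H2 (eps / 2)) as [d2 [Hd2 B]]; [lra|].
  exists (Rmin d1 d2). split. apply Rmin_pos; auto.
  intros b Hb Hbd.
  assert (A' := A b Hb ltac:(eapply Rlt_le_trans; [apply Hbd|apply Rmin_l])).
  assert (B' := B b Hb ltac:(eapply Rlt_le_trans; [apply Hbd|apply Rmin_r])).
  apply Rabs_def2 in A'. apply Rabs_def2 in B'. unfold gg.
  apply Rabs_def1; nra.
Qed.

Lemma prod_est A Al c D D' K L eta : 0 <= c <= K -> 0 <= D <= 1 -> 0 <= Al <= L ->
  Rabs (A - Al) < eta -> Rabs (D - D') < eta ->
  Rabs (A * c * (1 - D) - Al * c * (1 - D')) <= K * (1 + L) * eta.
Proof.
  intros Hc HD HA H1 H2. apply Rabs_def2 in H1. apply Rabs_def2 in H2.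
  set (u := (A - Al) * (1 - D)). set (v := Al * (D' - D)).
  assert (Hu : - eta <= u <= eta) by (unfold u; split; nra).
  assert (Hv : - (L * eta) <= v <= L * eta) by (unfold v; split; nra).
  replace (A * c * (1 - D) - Al * c * (1 - D')) with (c * (u + v)) by (unfold u, v; ring).
  apply Rabs_le. split; nra.
Qed.

Lemma M_lim_gen e (A : R -> R) Al fc ph K L b0 (DL : R -> R) :
  0 < fc <= 1 -> 0 <= ph <= K -> 0 <= Al <= L -> 0 <= K -> 0 <= L ->
  (forall b, 0 < b -> 0 <= A b) -> 0 < e ->
  (forall x0, 0 <= x0 -> forall eps, 0 < eps -> exists d, 0 < d /\ forall x b, 0 <= x ->
     Rabs (x - x0) < d -> 0 < b -> Rabs (b - b0) < d -> Rabs (Dq e x b - DL x0) < eps) ->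
  (forall eps, 0 < eps -> exists d, 0 < d /\ forall b, 0 < b -> Rabs (b - b0) < d ->
      Rabs (A b - Al) < eps) ->
  forall eps, 0 < eps -> exists d, 0 < d /\ forall b, 0 < b -> Rabs (b - b0) < d ->
      Rabs (A b * fc * ph * (1 - Dq e (A b * fc) b) - Al * fc * ph * (1 - DL (Al * fc))) < eps.
Proof.
  intros Hf Hph HAl HK HL HA He HJ HAlim eps Heps.
  set (eta := eps / (2 * (K + 1) * (1 + L))).
  assert (Heta : 0 < eta) by (unfold eta; apply Rdiv_lt_0_compat; nra).
  assert (Heta2 : K * (1 + L) * eta < eps).
  { unfold eta. replace (K * (1 + L) * (eps / (2 * (K + 1) * (1 + L)))) with
      (eps * (K / (2 * (K + 1)))) by (field; lra).
    assert (K / (2 * (K + 1)) < 1); [|nra].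
    apply (Rmult_lt_reg_r (2 * (K + 1))). lra. unfold Rdiv. rewrite Rmult_assoc, Rinv_l; lra. }
  destruct (HJ (Al * fc) ltac:(nra) eta Heta) as [dj [Hdj HJ']].
  destruct (HAlim (Rmin eta dj) ltac:(apply Rmin_pos; lra)) as [da [Hda HA']].
  exists (Rmin dj da). split. apply Rmin_pos; lra.
  intros b Hb Hbd.
  assert (Hb1 : Rabs (b - b0) < dj) by (eapply Rlt_le_trans; [apply Hbd|apply Rmin_l]).
  assert (Hb2 : Rabs (b - b0) < da) by (eapply Rlt_le_trans; [apply Hbd|apply Rmin_r]).
  assert (HA1 := HA' b Hb Hb2).
  assert (HA2 : Rabs (A b - Al) < eta) by (eapply Rlt_le_trans; [apply HA1|apply Rmin_l]).
  assert (HA3 : Rabs (A b * fc - Al * fc) < dj).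
  { replace (A b * fc - Al * fc) with ((A b - Al) * fc) by ring. rewrite Rabs_mult.
    rewrite (Rabs_pos_eq fc) by lra.
    assert (Rabs (A b - Al) < dj) by (eapply Rlt_le_trans; [apply HA1|apply Rmin_r]).
    assert (0 <= Rabs (A b - Al)) by apply Rabs_pos. nra. }
  assert (HAb := HA b Hb).
  assert (HD := HJ' (A b * fc) b ltac:(nra) HA3 Hb Hb1).
  assert (HDb : 0 < Dq e (A b * fc) b <= 1) by (apply Dq_bounds; nra).
  replace (A b * fc * ph * (1 - Dq e (A b * fc) b) - Al * fc * ph * (1 - DL (Al * fc)))
    with (A b * (fc * ph) * (1 - Dq e (A b * fc) b) - Al * (fc * ph) * (1 - DL (Al * fc))) by ring.
  eapply Rle_lt_trans; [|apply Heta2].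
  apply prod_est; try lra. split; nra.
Qed.

Lemma ball_R (x y eps : R) : ball x eps y <-> Rabs (y - x) < eps.
Proof. reflexivity. Qed.

Lemma glue (g E : R -> R) b0 : 0 <= b0 -> (forall b, 0 < b -> g b = E b) ->
  (forall eps, 0 < eps -> exists d, 0 < d /\ forall b, 0 < b -> Rabs (b - b0) < d ->
     Rabs (E b - g b0) < eps) ->
  filterlim g (within (fun b => 0 <= b) (locally b0)) (locally (g b0)).
Proof.
  intros Hb0 HgE H. apply filterlim_locally. intros eps.
  destruct (H eps (cond_pos eps)) as [d [Hd Hd']].
  unfold within, locally.
  assert (Hd2 : exists d2, 0 < d2 /\ d2 <= d /\ (0 < b0 -> d2 <= b0)).
  { destruct (Rlt_dec 0 b0). exists (Rmin d b0). split. apply Rmin_pos; lra.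
    split. apply Rmin_l. intros; apply Rmin_r.
    exists d. split; [lra|split; [lra|intros; lra]]. }
  destruct Hd2 as [d2 [Hd2 [Hd2d Hd2b]]].
  exists (mkposreal d2 Hd2). intros y Hy Hy0. rewrite ball_R in Hy |- *. simpl in Hy.
  destruct (Req_dec y 0) as [->|Hy1].
  - assert (b0 = 0).
    { destruct (Rlt_dec 0 b0); [|lra]. assert (d2 <= b0) by auto.
      rewrite Rabs_minus_sym, Rminus_0_r, Rabs_pos_eq in Hy; lra. }
    subst b0. rewrite Rminus_diag, Rabs_R0. apply cond_pos.
  - rewrite HgE by lra. apply Hd'. lra. lra.
Qed.

Lemma f_ivt (f : R -> R) phih y : 0 < phih -> f 0 = 1 ->
  (forall p, 0 <= p <= phih -> ex_derive f p) ->
  f phih <= y <= 1 -> exists p, 0 <= p <= phih /\ f p = y.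
Proof.
  intros Hph Hf0 Hd Hy.
  destruct (Req_dec y 1) as [->|H1]. exists 0. split; [lra|auto].
  destruct (Req_dec y (f phih)) as [->|H2]. exists phih. split; [lra|auto].
  destruct (Ranalysis5.IVT_interv (fun p => y - f p) 0 phih) as [z [Hz Hz']].
  - intros a Ha. apply continuity_pt_minus.
    apply continuity_pt_const. intros ? ?; reflexivity.
    apply (proj2 (continuity_pt_filterlim f a)). apply (@ex_derive_continuous R_AbsRing R_NormedModule f a). apply Hd; auto.
  - auto.
  - simpl. rewrite Hf0. lra.
  - simpl. lra.
  - exists z. split; auto. lra.
Qed.

Lemma finv_thr (f : R -> R) phih y phi : 0 < phih -> f 0 = 1 ->
  (forall p, 0 <= p <= phih -> 0 < f p <= 1) ->
  (forall x y, 0 <= x <= phih -> 0 <= y <= phih -> x < y -> f y < f x) ->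
  (forall p, 0 <= p <= phih -> ex_derive f p) ->
  0 <= phi <= phih ->
  (phi < finv f phih y -> y < f phi) /\ (finv f phih y <= phi -> f phi <= y).
Proof.
  intros Hph Hf0 Hfp Hfd Hder Hphi. unfold finv.
  destruct (Rlt_dec 1 y).
  - split; intros; [lra|]. assert (Hq := Hfp phi Hphi). lra.
  - destruct (Rlt_dec y (f phih)).
    + split; intros; [|lra].
      destruct (Req_dec phi phih) as [->|Hne]. auto.
      assert (f phih < f phi) by (apply Hfd; lra). lra.
    + assert (Hex : exists p, 0 <= p <= phih /\ f p = y) by (apply f_ivt; auto; lra).
      destruct (epsilon_spec (inhabits 0) (fun p => 0 <= p <= phih /\ f p = y) Hex) as [Hp Hfpy].
      set (p := epsilon (inhabits 0) (fun p => 0 <= p <= phih /\ f p = y)) in *.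
      split; intros.
      * rewrite <- Hfpy. apply Hfd; lra.
      * rewrite <- Hfpy. destruct (Req_dec p phi) as [->|]. lra. left; apply Hfd; lra.
Qed.

Definition Bl e lam f := hh e (lam * f) * f + 1 - f.
Definition GL e f1 f2 Lam lam := Bl e lam f1 - Bl e (Lam - lam) f2.

Lemma m_spec e lam f : 0 < e -> 0 <= lam -> 0 < f ->
  let m := 1 - Bl e lam f in
  m <= f /\ lam * m <= e /\ (m = f \/ lam * m = e) /\ 0 < m.
Proof.
  intros He Hl Hf m. unfold m, Bl, hh. destruct (Rle_dec (lam * f) e).
  - replace (1 - (0 * f + 1 - f)) with f by ring. split; [lra|]. split; [lra|]. split; [left; auto|lra].
  - assert (0 < lam) by (destruct (Req_dec lam 0) as [->|]; [lra|lra]).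
    replace (1 - ((1 - e / (lam * f)) * f + 1 - f)) with (e / lam) by (field; lra).
    assert (E : lam * (e / lam) = e) by (field; lra).
    assert (e / lam < f).
    { apply (Rmult_lt_reg_l lam); [lra|]. rewrite E. lra. }
    split; [lra|]. split; [lra|]. split; [right; auto|]. apply Rdiv_lt_0_compat; lra.
Qed.

Lemma GL_m e f1 f2 Lam lam : GL e f1 f2 Lam lam = (1 - Bl e (Lam - lam) f2) - (1 - Bl e lam f1).
Proof. unfold GL. ring. Qed.

Lemma GLa_lo e f1 f2 Lam a : 0 < e -> 0 < Lam -> 0 < f1 <= f2 -> 2 * e < Lam * f1 ->
  0 <= a < Lam / 2 -> GL e f1 f2 Lam a < 0.
Proof.
  intros He HL Hf Hc Ha. rewrite GL_m.
  destruct (m_spec e a f1 He ltac:(lra) ltac:(lra)) as [A1 [A2 [A3 A4]]].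
  destruct (m_spec e (Lam - a) f2 He ltac:(lra) ltac:(lra)) as [B1 [B2 [B3 B4]]].
  set (m1 := 1 - Bl e a f1) in *. set (m2 := 1 - Bl e (Lam - a) f2) in *.
  assert (m2 * Lam < 2 * e) by nra.
  assert (m2 < f1) by nra.
  destruct A3 as [A3|A3]. lra. nra.
Qed.

Lemma GLa_hi e f1 f2 Lam c : 0 < e -> 0 < Lam -> 0 < f1 <= f2 -> 2 * e < Lam * f1 ->
  Lam / 2 < c <= Lam -> 0 < GL e f1 f2 Lam c.
Proof.
  intros He HL Hf Hc Ha. rewrite GL_m.
  destruct (m_spec e c f1 He ltac:(lra) ltac:(lra)) as [A1 [A2 [A3 A4]]].
  destruct (m_spec e (Lam - c) f2 He ltac:(lra) ltac:(lra)) as [B1 [B2 [B3 B4]]].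
  set (m1 := 1 - Bl e c f1) in *. set (m2 := 1 - Bl e (Lam - c) f2) in *.
  assert (m1 * Lam < 2 * e) by nra.
  assert (m1 < f1) by nra.
  destruct B3 as [B3|B3]. lra. nra.
Qed.

Lemma GLb_lo e f1 f2 Lam a : 0 < e -> 0 < Lam -> 0 < f1 < f2 -> Lam * f1 <= 2 * e ->
  0 <= a -> a * f1 < Lam * f1 - e -> GL e f1 f2 Lam a < 0.
Proof.
  intros He HL Hf Hc Ha Haw. rewrite GL_m.
  destruct (m_spec e a f1 He ltac:(lra) ltac:(lra)) as [A1 [A2 [A3 A4]]].
  assert (H' : (Lam - a) * f1 > e) by nra.
  assert (a <= Lam).
  { destruct (Rle_dec a Lam); auto. assert ((Lam - a) * f1 < 0); [|lra].
    apply Rmult_neg_pos; lra. }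
  destruct (m_spec e (Lam - a) f2 He ltac:(lra) ltac:(lra)) as [B1 [B2 [B3 B4]]].
  set (m1 := 1 - Bl e a f1) in *. set (m2 := 1 - Bl e (Lam - a) f2) in *.
  assert (Hm1 : m1 = f1).
  { destruct A3 as [A3|A3]; auto. nra. }
  assert ((Lam - a) * f1 > e) by nra.
  nra.
Qed.

Lemma GLb_hi e f1 f2 Lam c : 0 < e -> 0 < Lam -> 0 < f1 < f2 -> e < Lam * f1 ->
  Lam * f1 - e < c * f1 -> c <= Lam -> 0 < GL e f1 f2 Lam c.
Proof.
  intros He HL Hf Hef Hw Hc. rewrite GL_m.
  assert (0 <= c).
  { destruct (Rle_dec 0 c); auto. assert (c * f1 < 0) by (apply Rmult_neg_pos; lra). lra. }
  destruct (m_spec e c f1 He ltac:(lra) ltac:(lra)) as [A1 [A2 [A3 A4]]].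
  destruct (m_spec e (Lam - c) f2 He ltac:(lra) ltac:(lra)) as [B1 [B2 [B3 B4]]].
  set (m1 := 1 - Bl e c f1) in *. set (m2 := 1 - Bl e (Lam - c) f2) in *.
  destruct B3 as [B3|B3]. lra.
  assert ((Lam - c) * f1 < e) by nra.
  nra.
Qed.

Lemma hh_prod e lam f : 0 < e -> 0 <= lam -> 0 < f ->
  lam * f * (1 - hh e (lam * f)) = (if Rle_dec (lam * f) e then lam * f else e).
Proof.
  intros He Hl Hf. unfold hh. destruct (Rle_dec (lam * f) e) as [Hle|Hn]. ring.
  apply Rnot_le_lt in Hn. assert (0 < lam) by nra. field. split; lra.
Qed.

Lemma GLc_hi e f1 f2 Lam c : 0 < e -> 0 < Lam -> 0 < f1 < f2 -> Lam * f1 <= e ->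
  0 < c <= Lam -> 0 < GL e f1 f2 Lam c.
Proof.
  intros He HL Hf Hef Hc. rewrite GL_m.
  destruct (m_spec e c f1 He ltac:(lra) ltac:(lra)) as [A1 [A2 [A3 A4]]].
  destruct (m_spec e (Lam - c) f2 He ltac:(lra) ltac:(lra)) as [B1 [B2 [B3 B4]]].
  set (m1 := 1 - Bl e c f1) in *. set (m2 := 1 - Bl e (Lam - c) f2) in *.
  destruct B3 as [B3|B3]. lra.
  assert ((Lam - c) * f1 < e) by nra.
  nra.
Qed.

Definition HJp e b0 (DL : R -> R) := forall x0, 0 <= x0 -> forall eps, 0 < eps -> exists d, 0 < d /\
  forall x b, 0 <= x -> Rabs (x - x0) < d -> 0 < b -> Rabs (b - b0) < d -> Rabs (Dq e x b - DL x0) < eps.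

Lemma HJ_pos e b0 : 0 < e -> 0 < b0 -> HJp e b0 (fun x => Dq e x b0).
Proof. intros He Hb x0 Hx0. apply Dq_joint; auto. Qed.

Lemma HJ_zero e : 0 < e -> HJp e 0 (hh e).
Proof.
  intros He x0 Hx0 eps Heps. destruct (Dq_joint0 e x0 He Hx0 eps Heps) as [d [Hd H]].
  exists d. split; auto. intros x b Hx Hxx Hb Hbb. apply H; auto.
  rewrite Rminus_0_r, Rabs_pos_eq in Hbb; lra.
Qed.

Lemma HJ_pt e b0 DL x0 : HJp e b0 DL -> 0 <= x0 ->
  forall eps, 0 < eps -> exists d, 0 < d /\ forall b, 0 < b -> Rabs (b - b0) < d ->
    Rabs (Dq e x0 b - DL x0) < eps.
Proof.
  intros H Hx eps Heps. destruct (H x0 Hx eps Heps) as [d [Hd H']].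
  exists d. split; auto. intros b Hb Hbb. apply H'; auto. rewrite Rminus_diag, Rabs_R0; auto.
Qed.

Lemma lo_gen e f1 f2 Lam b0 DL a : 0 < e -> 0 < f1 <= 1 -> 0 < f2 <= 1 -> HJp e b0 DL ->
  0 <= a <= Lam ->
  (DL (a * f1) * f1 + 1 - f1) - (DL ((Lam - a) * f2) * f2 + 1 - f2) < 0 ->
  exists d, 0 < d /\ forall b, 0 < b -> Rabs (b - b0) < d -> gg e f1 f2 Lam b a <= 0.
Proof.
  intros He Hf1 Hf2 HJ Ha Hneg.
  destruct (gg_persist e f1 f2 Lam b0 a (DL (a * f1)) (DL ((Lam - a) * f2)) Hf1 Hf2
    (HJ_pt e b0 DL (a * f1) HJ ltac:(nra)) (HJ_pt e b0 DL ((Lam - a) * f2) HJ ltac:(nra))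
    _ ltac:(apply Ropp_0_gt_lt_contravar; exact Hneg)) as [d [Hd H]].
  exists d. split; auto. intros b Hb Hbb. assert (H' := H b Hb Hbb).
  apply Rabs_def2 in H'. lra.
Qed.

Lemma hi_gen e f1 f2 Lam b0 DL c : 0 < e -> 0 < f1 <= 1 -> 0 < f2 <= 1 -> HJp e b0 DL ->
  0 <= c <= Lam ->
  0 < (DL (c * f1) * f1 + 1 - f1) - (DL ((Lam - c) * f2) * f2 + 1 - f2) ->
  exists d, 0 < d /\ forall b, 0 < b -> Rabs (b - b0) < d -> 0 <= gg e f1 f2 Lam b c.
Proof.
  intros He Hf1 Hf2 HJ Ha Hpos.
  destruct (gg_persist e f1 f2 Lam b0 c (DL (c * f1)) (DL ((Lam - c) * f2)) Hf1 Hf2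
    (HJ_pt e b0 DL (c * f1) HJ ltac:(nra)) (HJ_pt e b0 DL ((Lam - c) * f2) HJ ltac:(nra))
    _ Hpos) as [d [Hd H]].
  exists d. split; auto. intros b Hb Hbb. assert (H' := H b Hb Hbb).
  apply Rabs_def2 in H'. lra.
Qed.

Lemma final_from e f1 f2 Lam phih phi1 phi2 (W : R -> R) b0 Wl (DL : R -> R)
  (g0 g1 g2 : R -> R) :
  0 < e -> 0 < Lam -> 0 < f1 <= 1 -> 0 < f2 <= 1 -> 0 <= phi1 <= phih -> 0 <= phi2 <= phih ->
  0 <= b0 -> 0 <= Wl <= Lam ->
  (forall b, 0 < b -> wardq e f1 f2 Lam b (W b)) ->
  HJp e b0 DL ->
  (forall a, 0 <= a -> a < Wl -> exists d, 0 < d /\ forall b, 0 < b -> Rabs (b - b0) < d ->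
      gg e f1 f2 Lam b a <= 0) ->
  (forall c, Wl < c -> c <= Lam -> exists d, 0 < d /\ forall b, 0 < b -> Rabs (b - b0) < d ->
      0 <= gg e f1 f2 Lam b c) ->
  g0 b0 = Wl -> (forall b, 0 < b -> g0 b = W b) ->
  g1 b0 = Wl * f1 * phi1 * (1 - DL (Wl * f1)) ->
  (forall b, 0 < b -> g1 b = W b * f1 * phi1 * (1 - Dq e (W b * f1) b)) ->
  g2 b0 = (Lam - Wl) * f2 * phi2 * (1 - DL ((Lam - Wl) * f2)) ->
  (forall b, 0 < b -> g2 b = (Lam - W b) * f2 * phi2 * (1 - Dq e ((Lam - W b) * f2) b)) ->
  filterlim g0 (within (fun b => 0 <= b) (locally b0)) (locally (g0 b0)) /\
  filterlim g1 (within (fun b => 0 <= b) (locally b0)) (locally (g1 b0)) /\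
  filterlim g2 (within (fun b => 0 <= b) (locally b0)) (locally (g2 b0)).
Proof.
  intros He HL Hf1 Hf2 Hp1 Hp2 Hb0 HWl HW HJ Hlo Hhi G0 G0' G1 G1' G2 G2'.
  assert (WL := W_cont_gen e f1 f2 Lam W b0 Wl He ltac:(lra) ltac:(lra) HWl HW Hlo Hhi).
  split; [|split].
  - apply (glue g0 g0); auto. rewrite G0. intros eps Heps. destruct (WL eps Heps) as [d [Hd H]].
    exists d. split; auto. intros b Hb Hbb. rewrite G0' by auto. auto.
  - apply (glue g1 g1); auto. rewrite G1. intros eps Heps.
    destruct (M_lim_gen e W Wl f1 phi1 phih Lam b0 DL Hf1 ltac:(lra) HWl ltac:(lra) ltac:(lra)
      ltac:(intros b Hb; destruct (HW b Hb); lra) He HJ WL eps Heps) as [d [Hd H]].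
    exists d. split; auto. intros b Hb Hbb. rewrite G1' by auto. auto.
  - apply (glue g2 g2); auto. rewrite G2. intros eps Heps.
    destruct (M_lim_gen e (fun b => Lam - W b) (Lam - Wl) f2 phi2 phih Lam b0 DL Hf2 ltac:(lra)
      ltac:(lra) ltac:(lra) ltac:(lra)
      ltac:(intros b Hb; destruct (HW b Hb); lra) He HJ
      ltac:(intros eps' Heps'; destruct (WL eps' Heps') as [d' [Hd' H']]; exists d'; split; auto;
            intros b Hb Hbb; replace (Lam - W b - (Lam - Wl)) with (- (W b - Wl)) by ring;
            rewrite Rabs_Ropp; auto) eps Heps) as [d [Hd H]].
    exists d. split; auto. intros b Hb Hbb. rewrite G2' by auto. auto.
Qed.

Lemma div_lt_l c L x : 0 < L -> c / L < x -> c < L * x.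
Proof. intros HL H. apply (Rmult_lt_compat_l L) in H; auto. unfold Rdiv in H.
  replace (L * (c * / L)) with c in H by (field; lra). lra. Qed.

Lemma div_le_r c L x : 0 < L -> x <= c / L -> L * x <= c.
Proof. intros HL H. apply (Rmult_le_compat_l L) in H; [|lra]. unfold Rdiv in H.
  replace (L * (c * / L)) with c in H by (field; lra). lra. Qed.

Theorem theorem3
  (f : R -> R) (phih Lam e phi1 phi2 : R) (W : R -> R)
  (Hphih : 0 < phih) (HLam : 0 < Lam) (He : 0 < e)
  (Hf0 : f 0 = 1)
  (Hfpos : forall p, 0 <= p <= phih -> 0 < f p <= 1)
  (Hfdec : forall x y, 0 <= x <= phih -> 0 <= y <= phih -> x < y -> f y < f x)
  (Hfconc : forall x y t, 0 <= x <= phih -> 0 <= y <= phih -> x <> y ->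
     0 < t < 1 -> t * f x + (1 - t) * f y < f (t * x + (1 - t) * y))
  (Hfdiff : forall p, 0 <= p <= phih -> ex_derive f p)
  (Hphi1 : 0 <= phi1 <= phih) (Hphi2 : 0 <= phi2 <= phih) (H12 : phi2 <= phi1)
  (HW : forall beta, 0 < beta -> is_wardrop f e Lam phi1 phi2 beta (W beta))
  (HW0 : W 0 = lam1_tilde f phih e Lam phi1 phi2) :
  cont_on_nonneg W /\
  cont_on_nonneg (fun beta => if Req_dec_T beta 0 then M1_tilde f phih e Lam phi1 phi2
                              else Mrev f e (W beta) phi1 beta) /\
  cont_on_nonneg (fun beta => if Req_dec_T beta 0 then M2_tilde f phih e Lam phi1 phi2
                              else Mrev f e (Lam - W beta) phi2 beta).
Proof.
  assert (Hf1 : 0 < f phi1 <= 1) by (apply Hfpos; auto).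
  assert (Hf2 : 0 < f phi2 <= 1) by (apply Hfpos; auto).
  assert (HWq : forall b, 0 < b -> wardq e (f phi1) (f phi2) Lam b (W b)) by
    (intros b Hb; exact (HW b Hb)).
  match goal with |- cont_on_nonneg _ /\ cont_on_nonneg ?G1 /\ cont_on_nonneg ?G2 =>
    set (g1 := G1); set (g2 := G2) end.
  assert (G1' : forall b, 0 < b -> g1 b = W b * f phi1 * phi1 * (1 - Dq e (W b * f phi1) b)).
  { intros b Hb. unfold g1. destruct (Req_dec_T b 0). lra. reflexivity. }
  assert (G2' : forall b, 0 < b -> g2 b =
     (Lam - W b) * f phi2 * phi2 * (1 - Dq e ((Lam - W b) * f phi2) b)).
  { intros b Hb. unfold g2. destruct (Req_dec_T b 0). lra. reflexivity. }
  assert (G10 : g1 0 = M1_tilde f phih e Lam phi1 phi2).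
  { unfold g1. destruct (Req_dec_T 0 0). reflexivity. lra. }
  assert (G20 : g2 0 = M2_tilde f phih e Lam phi1 phi2).
  { unfold g2. destruct (Req_dec_T 0 0). reflexivity. lra. }
  enough (Hall : forall b0, 0 <= b0 ->
    filterlim W (within (fun b => 0 <= b) (locally b0)) (locally (W b0)) /\
    filterlim g1 (within (fun b => 0 <= b) (locally b0)) (locally (g1 b0)) /\
    filterlim g2 (within (fun b => 0 <= b) (locally b0)) (locally (g2 b0))).
  { unfold cont_on_nonneg. split; [|split]; intros b0 Hb0; apply (Hall b0 Hb0). }
  intros b0 Hb0. destruct (Rlt_dec 0 b0) as [Hpos|Hz].
  - destruct (HWq b0 Hpos) as [Hw Hm].
    apply (final_from e (f phi1) (f phi2) Lam phih phi1 phi2 W b0 (W b0) (fun x => Dq e x b0));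
      auto.
    + apply HJ_pos; auto.
    + intros a Ha Haw. apply (lo_gen e (f phi1) (f phi2) Lam b0 (fun x => Dq e x b0) a); auto.
      apply HJ_pos; auto. lra.
      change (gg e (f phi1) (f phi2) Lam b0 a < 0).
      apply (ward_lo2 (gg e (f phi1) (f phi2) Lam b0) Lam (W b0)); auto.
      intros; apply gg_strict; lra.
    + intros c Hc HcL. apply (hi_gen e (f phi1) (f phi2) Lam b0 (fun x => Dq e x b0) c); auto.
      apply HJ_pos; auto. lra.
      change (0 < gg e (f phi1) (f phi2) Lam b0 c).
      apply (ward_hi2 (gg e (f phi1) (f phi2) Lam b0) Lam (W b0)); auto.
      intros; apply gg_strict; lra.
  - assert (b0 = 0) by lra. subst b0.
    assert (Hlow := finv_thr f phih (2 * e / Lam) phi1 Hphih Hf0 Hfpos Hfdec Hfdiff Hphi1).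
    assert (Hbar := finv_thr f phih (e / Lam) phi1 Hphih Hf0 Hfpos Hfdec Hfdiff Hphi1).
    fold (phi_low f phih e Lam) in Hlow. fold (phi_bar f phih e Lam) in Hbar.
    assert (Hf12 : f phi1 <= f phi2).
    { destruct (Req_dec phi1 phi2) as [->|]. lra. left; apply Hfdec; lra. }
    assert (HJ0 := HJ_zero e He).
    unfold lam1_tilde in HW0. unfold M1_tilde, M2_tilde in G10, G20.
    revert HW0 G10 G20.
    destruct (Rlt_dec phi1 (phi_low f phih e Lam)) as [Ca|Ca].
    + (* case (a) *) intros HW0 G10 G20.
      assert (Hc : 2 * e < Lam * f phi1) by (apply div_lt_l; auto; apply Hlow; auto).
      apply (final_from e (f phi1) (f phi2) Lam phih phi1 phi2 W 0 (Lam / 2) (hh e)); auto; try lra.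
      * intros a Ha Haw. apply (lo_gen e (f phi1) (f phi2) Lam 0 (hh e) a); auto. lra.
        change (GL e (f phi1) (f phi2) Lam a < 0). apply GLa_lo; lra.
      * intros c Hc1 Hc2. apply (hi_gen e (f phi1) (f phi2) Lam 0 (hh e) c); auto. lra.
        change (0 < GL e (f phi1) (f phi2) Lam c). apply GLa_hi; lra.
      * rewrite G10. replace (Lam / 2 * f phi1 * phi1 * (1 - hh e (Lam / 2 * f phi1)))
          with (Lam / 2 * f phi1 * (1 - hh e (Lam / 2 * f phi1)) * phi1) by ring.
        rewrite hh_prod by lra. destruct (Rle_dec (Lam / 2 * f phi1) e); [lra|ring].
      * rewrite G20. replace ((Lam - Lam / 2) * f phi2 * phi2 * (1 - hh e ((Lam - Lam / 2) * f phi2)))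
          with ((Lam - Lam / 2) * f phi2 * (1 - hh e ((Lam - Lam / 2) * f phi2)) * phi2) by ring.
        rewrite hh_prod by lra. destruct (Rle_dec ((Lam - Lam / 2) * f phi2) e); [nra|ring].
    + assert (Hc : Lam * f phi1 <= 2 * e) by (apply div_le_r; auto; apply Hlow; lra).
      destruct (Req_dec_T phi1 phi2) as [Cd|Cd].
      * (* case (d) *) intros HW0 G10 G20.
        subst phi2.
        assert (Hz0 : forall b, 0 < b -> gg e (f phi1) (f phi1) Lam b (Lam / 2) = 0).
        { intros b Hb. unfold gg. replace (Lam - Lam / 2) with (Lam / 2) by field. ring. }
        apply (final_from e (f phi1) (f phi1) Lam phih phi1 phi1 W 0 (Lam / 2) (hh e)); auto; try lra.
        -- intros a Ha Haw. exists 1. split. lra. intros b Hb _.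
           rewrite <- (Hz0 b Hb). left. apply gg_strict; lra.
        -- intros c Hc1 Hc2. exists 1. split. lra. intros b Hb _.
           rewrite <- (Hz0 b Hb). left. apply gg_strict; lra.
        -- rewrite G10. replace (Lam / 2 * f phi1 * phi1 * (1 - hh e (Lam / 2 * f phi1)))
             with (Lam / 2 * f phi1 * (1 - hh e (Lam / 2 * f phi1)) * phi1) by ring.
           rewrite hh_prod by lra. destruct (Rle_dec (Lam / 2 * f phi1) e); [ring|lra].
        -- rewrite G20. replace ((Lam - Lam / 2) * f phi1 * phi1 * (1 - hh e ((Lam - Lam / 2) * f phi1)))
             with ((Lam - Lam / 2) * f phi1 * (1 - hh e ((Lam - Lam / 2) * f phi1)) * phi1) by ring.
           rewrite hh_prod by lra. destruct (Rle_dec ((Lam - Lam / 2) * f phi1) e); [field|lra].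
      * assert (Hlt : f phi1 < f phi2) by (apply Hfdec; auto; lra).
        destruct (Rlt_dec phi1 (phi_bar f phih e Lam)) as [Cb|Cb].
        -- (* case (b) *) intros HW0 G10 G20.
           assert (Hb1 : e < Lam * f phi1) by (apply div_lt_l; auto; apply Hbar; auto).
           assert (Hq : e / f phi1 < Lam).
           { apply (Rmult_lt_reg_r (f phi1)). lra. unfold Rdiv. rewrite Rmult_assoc, Rinv_l; lra. }
           assert (Hq0 : 0 < e / f phi1) by (apply Rdiv_lt_0_compat; lra).
           assert (HWl : (Lam - e / f phi1) * f phi1 = Lam * f phi1 - e) by (field; lra).
           apply (final_from e (f phi1) (f phi2) Lam phih phi1 phi2 W 0 (Lam - e / f phi1) (hh e));
             auto; try lra.
           ++ intros a Ha Haw. apply (lo_gen e (f phi1) (f phi2) Lam 0 (hh e) a); auto. lra.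
              change (GL e (f phi1) (f phi2) Lam a < 0). apply GLb_lo; try lra.
              rewrite <- HWl. apply Rmult_lt_compat_r; lra.
           ++ intros c Hc1 Hc2. apply (hi_gen e (f phi1) (f phi2) Lam 0 (hh e) c); auto. lra.
              change (0 < GL e (f phi1) (f phi2) Lam c). apply GLb_hi; try lra.
              rewrite <- HWl. apply Rmult_lt_compat_r; lra.
           ++ rewrite G10. replace ((Lam - e / f phi1) * f phi1 * phi1 * (1 - hh e ((Lam - e / f phi1) * f phi1)))
                with ((Lam - e / f phi1) * f phi1 * (1 - hh e ((Lam - e / f phi1) * f phi1)) * phi1) by ring.
              rewrite hh_prod by lra. rewrite HWl.
              destruct (Rle_dec (Lam * f phi1 - e) e); [unfold mfun; ring|lra].
           ++ rewrite G20. replace (Lam - (Lam - e / f phi1)) with (e / f phi1) by ring.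
              replace (e / f phi1 * f phi2 * phi2 * (1 - hh e (e / f phi1 * f phi2)))
                with (e / f phi1 * f phi2 * (1 - hh e (e / f phi1 * f phi2)) * phi2) by ring.
              rewrite hh_prod by lra.
              destruct (Rle_dec (e / f phi1 * f phi2) e) as [Hle|]; [|ring].
              exfalso. assert (e / f phi1 * f phi1 < e / f phi1 * f phi2) by
                (apply Rmult_lt_compat_l; lra).
              replace (e / f phi1 * f phi1) with e in H by (field; lra). lra.
        -- (* case (c) *) intros HW0 G10 G20.
           assert (Hc1 : Lam * f phi1 <= e) by (apply div_le_r; auto; apply Hbar; lra).
           apply (final_from e (f phi1) (f phi2) Lam phih phi1 phi2 W 0 0 (hh e)); auto; try lra.
           ++ intros a Ha Haw. lra.
           ++ intros c Hc2 Hc3. apply (hi_gen e (f phi1) (f phi2) Lam 0 (hh e) c); auto. lra.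
              change (0 < GL e (f phi1) (f phi2) Lam c). apply GLc_hi; lra.
           ++ rewrite G20. replace ((Lam - 0) * f phi2 * phi2 * (1 - hh e ((Lam - 0) * f phi2)))
                with ((Lam - 0) * f phi2 * (1 - hh e ((Lam - 0) * f phi2)) * phi2) by ring.
              rewrite hh_prod by lra. replace (Lam - 0) with Lam by ring.
              unfold Rmin. destruct (Rle_dec (Lam * f phi2) e); reflexivity.
Qed.
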